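(* Let $\Sigma$ be a finite alphabet and let $S$ be a set of unranked trees over $\Sigma$ definable by a sibling-order-invariant MSO sentence over the class of all unranked trees over $\Sigma$. Then there is a deterministic $\triangleleft$-invariant tree automaton $\mathcal N$ over $\Sigma$ such that $S$ is exactly the set of unranked trees $T$ for which some sibling-ordered extension $(T,\triangleleft)$ of $T$ is accepted by $\mathcal N$ (equivalently, for which every sibling-ordered extension $(T,\triangleleft)$ of $T$ is accepted by $\mathcal N$).
   Context: An unranked tree domain $D$ is a finite prefix-closed set of words over the positive integers such that $s\cdot i\in D$ implies $s\cdot j\in D$ for all $1\le j<i$; its root is the empty word $\varepsilon$. An unranked tree over $\Sigma$ is a structure $T=(D,\prec,(P_a)_{a\in\Sigma})$ where $\prec$ is the descendant relation and the sets $P_a$ partition $D$ (node labels). A sibling order on $T$ is a binary relation $\triangleleft$ relating only distinct children $s\cdot i,s\cdot j$ of a common node $s$ and which is a linear order on the set of children of each node; $(T,\triangleleft)$ is a sibling-ordered extension of $T$. An MSO sentence $\varphi$ over the tree vocabulary plus a binary symbol $\triangleleft$ is sibling-order-invariant if for every unranked tree $T$ and any two sibling orders $\triangleleft_1,\triangleleft_2$ on $T$, $(T,\triangleleft_1)\models\varphi$ iff $(T,\triangleleft_2)\models\varphi$; it defines the set of trees $T$ with $(T,\triangleleft)\models\varphi$ for some (equivalently every) sibling order. A tree automaton is $\mathcal N=(\Sigma,Q,F,\delta)$ with finite state set $Q$, final states $F\subseteq Q$, and $\delta:Q\times\Sigma\to 2^{Q^*}$ with each $\delta(q,a)$ a regular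 language over $Q$. A run of $\mathcal N$ on $(T,\triangleleft)$ is a map $\rho:D\to Q$ such that for each node $s$ labeled $a$ with children $s_1\triangleleft\cdots\triangleleft s_n$, the word $\rho(s_1)\cdots\rho(s_n)\in\delta(\rho(s),a)$ (for a leaf, the empty word must be in $\delta(\rho(s),a)$); $(T,\triangleleft)$ is accepted if some run has $\rho(\varepsilon)\in F$. $\mathcal N$ is deterministic if for all $a$ and $q\ne q'$, $\delta(q,a)\cap\delta(q',a)=\emptyset$. $\mathcal N$ is $\triangleleft$-invariant if for all $q,a$, every permutation of a word in $\delta(q,a)$ is in $\delta(q,a)$. *)

(* Defs.v *)
From mathcomp Require Import all_boot.
Set Implicit Arguments. Unset Strict Implicit. Unset Printing Implicit Defensive.

(* Nodes are words over the positive integers, represented as [seq nat]. *)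

Definition is_tree_domain (D : seq (seq nat)) : Prop :=
  [/\ [::] \in D,
      (forall (s : seq nat) (i : nat), rcons s i \in D -> s \in D /\ 0 < i)
    & (forall (s : seq nat) (i j : nat), rcons s i \in D -> 0 < j < i ->
          rcons s j \in D)].

(* An unranked tree over Sigma: a finite tree domain together with a labelling
   (the sets P_a = { s | lab s = a } partition the domain). *)
Record utree (Sigma : Type) := UTree {
  dom : seq (seq nat);
  lab : seq nat -> Sigma;
  dom_ok : is_tree_domain dom }.

Definition child_of (s w : seq nat) : bool :=
  (size w == (size s).+1) && prefix s w.

Definition desc (u v : seq nat) : bool := prefix u v && (u != v).

Definition sibling_order (Sigma : Type) (T : utree Sigma) (so : rel (seq nat))
  : Prop :=
  [/\ (forall u v, so u v ->
          [/\ u \in dom T, v \in dom T, u != v &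
              exists s, child_of s u && child_of s v]),
      (forall u v w, so u v -> so v w -> so u w)
    & (forall s u v, u \in dom T -> v \in dom T ->
          child_of s u -> child_of s v -> u != v -> so u v || so v u)].

Inductive mso (Sigma : Type) :=
| MLab of Sigma & nat
| MDesc of nat & nat
| MSib of nat & nat
| MEq of nat & nat
| MIn of nat & nat
| MNot of mso Sigma
| MOr of mso Sigma & mso Sigma
| MEx1 of nat & mso Sigma
| MEx2 of nat & mso Sigma.

Fixpoint fv1 (Sigma : Type) (f : mso Sigma) : seq nat :=
  match f with
  | MLab _ x => [:: x]
  | MDesc x y | MSib x y | MEq x y => [:: x; y]
  | MIn x _ => [:: x]
  | MNot g => fv1 g
  | MOr g h => fv1 g ++ fv1 h
  | MEx1 x g => filter (predC1 x) (fv1 g)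
  | MEx2 _ g => fv1 g
  end.

Fixpoint fv2 (Sigma : Type) (f : mso Sigma) : seq nat :=
  match f with
  | MIn _ X => [:: X]
  | MLab _ _ | MDesc _ _ | MSib _ _ | MEq _ _ => [::]
  | MNot g => fv2 g
  | MOr g h => fv2 g ++ fv2 h
  | MEx1 _ g => fv2 g
  | MEx2 X g => filter (predC1 X) (fv2 g)
  end.

Definition sentence (Sigma : Type) (f : mso Sigma) : bool :=
  nilp (fv1 f) && nilp (fv2 f).

Definition upd (A : Type) (e : nat -> A) (x : nat) (a : A) : nat -> A :=
  fun y => if y == x then a else e y.

Fixpoint sat (Sigma : eqType) (T : utree Sigma) (so : rel (seq nat))
    (e1 : nat -> seq nat) (e2 : nat -> pred (seq nat)) (f : mso Sigma)
    : Prop :=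
  match f with
  | MLab a x => lab T (e1 x) = a
  | MDesc x y => desc (e1 x) (e1 y)
  | MSib x y => so (e1 x) (e1 y)
  | MEq x y => e1 x = e1 y
  | MIn x X => e2 X (e1 x)
  | MNot g => ~ sat T so e1 e2 g
  | MOr g h => sat T so e1 e2 g \/ sat T so e1 e2 h
  | MEx1 x g => exists u, u \in dom T /\ sat T so (upd e1 x u) e2 g
  | MEx2 X g => exists P : pred (seq nat),
      (forall u, P u -> u \in dom T) /\ sat T so e1 (upd e2 X P) g
  end.

(* satisfaction of a sentence (the environments are irrelevant for sentences) *)
Definition models (Sigma : eqType) (T : utree Sigma) (so : rel (seq nat))
    (f : mso Sigma) : Prop :=
  sat T so (fun _ => [::]) (fun _ _ => false) f.

Definition so_invariant (Sigma : eqType) (f : mso Sigma) : Prop :=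
  forall (T : utree Sigma) (so1 so2 : rel (seq nat)),
    sibling_order T so1 -> sibling_order T so2 ->
    (models T so1 f <-> models T so2 f).

Definition regular (A : Type) (L : pred (seq A)) : Prop :=
  exists (St : finType) (s0 : St) (acc : pred St) (tr : St -> A -> St),
    forall w, L w = acc (foldl tr s0 w).

Record tree_automaton (Sigma : Type) := TreeAutomaton {
  ta_Q : finType;
  ta_F : pred ta_Q;
  ta_delta : ta_Q -> Sigma -> pred (seq ta_Q);
  ta_regular : forall q a, regular (ta_delta q a) }.

Definition ta_deterministic (Sigma : Type) (N : tree_automaton Sigma) : Prop :=
  forall (a : Sigma) (q q' : ta_Q N) (w : seq (ta_Q N)),
    q != q' -> ~~ (ta_delta q a w && ta_delta q' a w).

Definition ta_invariant (Sigma : Type) (N : tree_automaton Sigma) : Prop :=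
  forall (q : ta_Q N) (a : Sigma) (w w' : seq (ta_Q N)),
    perm_eq w w' -> ta_delta q a w -> ta_delta q a w'.

Definition is_run (Sigma : Type) (N : tree_automaton Sigma) (T : utree Sigma)
    (so : rel (seq nat)) (rho : seq nat -> ta_Q N) : Prop :=
  forall (s : seq nat) (cs : seq (seq nat)),
    s \in dom T -> uniq cs ->
    (forall w, (w \in cs) = (w \in dom T) && child_of s w) ->
    sorted so cs ->
    ta_delta (rho s) (lab T s) (map rho cs).

Arguments is_run {Sigma} N T so rho.

Definition accepts (Sigma : Type) (N : tree_automaton Sigma) (T : utree Sigma)
    (so : rel (seq nat)) : Prop :=
  exists rho : seq nat -> ta_Q N, is_run N T so rho /\ ta_F (rho [::]).

(* Main.v *)
Require Import Defs.
From mathcomp Require Import all_boot zify.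
From Stdlib Require Import ClassicalEpsilon.
Set Implicit Arguments. Unset Strict Implicit. Unset Printing Implicit Defensive.

Section Children.
Variable D : seq (seq nat).

Lemma child_ofP s w : child_of s w -> size w = (size s).+1 /\ prefix s w.
Proof. by case/andP=> /eqP -> ->. Qed.

Definition children (ord : rel (seq nat)) s :=
  sort (fun u v => (u == v) || ord u v) [seq w <- undup D | child_of s w].

Lemma mem_children ord s w : (w \in children ord s) = (w \in D) && child_of s w.
Proof. by rewrite mem_sort mem_filter mem_undup andbC. Qed.

Lemma uniq_children ord s : uniq (children ord s).
Proof. by rewrite sort_uniq filter_uniq // undup_uniq. Qed.

Lemma perm_children o1 o2 s : perm_eq (children o1 s) (children o2 s).
Proof. by rewrite /children perm_sort perm_sym perm_sort. Qed.

Definition bound := foldr (fun w m => maxn (size w) m) 0 D.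

Lemma size_bound w : w \in D -> size w <= bound.
Proof.
rewrite /bound; elim: D => //= x l IH; rewrite inE => /orP[/eqP->|/IH]; lia.
Qed.

Lemma D_ind (P : seq nat -> Prop) :
  (forall s, s \in D -> (forall c, c \in D -> size s < size c -> P c) -> P s) ->
  forall s, s \in D -> P s.
Proof.
move=> IH.
suff H : forall n s, s \in D -> bound - size s < n -> P s.
  by move=> s sD; apply: (H (bound - size s).+1).
elim=> [//|n IHn] s sD lt; apply: IH => // c cD lt'.
apply: IHn => //; have := size_bound cD; have := size_bound sD; lia.
Qed.

Variables (L Q : Type) (g : L -> seq Q -> Q) (ord : rel (seq nat)).

Section Ev.
Variable nu : seq nat -> L.

Fixpoint evalk k s : Q :=
  if k is k'.+1 then g (nu s) (map (evalk k') (children ord s))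
  else g (nu s) [::].

Definition evalG s := evalk bound.+1 s.

Lemma evalk_stab k k' s : bound - size s < k -> bound - size s < k' ->
  evalk k s = evalk k' s.
Proof.
elim: k k' s => [//|k IH] [//|k'] s lt lt' /=; congr g.
apply/eq_in_map => c; rewrite mem_children => /andP[cD /child_ofP[sz _]].
have := size_bound cD => hb; apply: IH; move: lt lt' hb; rewrite sz; lia.
Qed.

Lemma evalG_rec s : evalG s = g (nu s) (map evalG (children ord s)).
Proof.
rewrite /evalG /=; congr g; apply/eq_in_map => c.
rewrite mem_children => /andP[cD /child_ofP[sz _]].
have := size_bound cD => hb; apply: (@evalk_stab bound bound.+1 c); move: hb; rewrite sz; lia.
Qed.

Lemma evalG_unique (tau : seq nat -> Q) :
  (forall s, s \in D -> tau s = g (nu s) (map tau (children ord s))) ->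
  forall s, s \in D -> tau s = evalG s.
Proof.
move=> H; apply: D_ind => s sD IH; rewrite H // evalG_rec; congr g.
apply/eq_in_map => c; rewrite mem_children => /andP[cD /child_ofP[sz _]].
by apply: IH => //; rewrite sz.
Qed.
End Ev.

Lemma evalG_local nu nu' s : s \in D ->
  (forall w, w \in D -> prefix s w -> nu w = nu' w) -> evalG nu s = evalG nu' s.
Proof.
move: s; apply: D_ind => s sD IH H; rewrite !evalG_rec H ?prefix_refl //; congr g.
apply/eq_in_map => c; rewrite mem_children => /andP[cD /child_ofP[sz pc]].
apply: IH => //; first by rewrite sz.
by move=> w wD pw; apply: H => //; apply: prefix_trans pc pw.
Qed.

Lemma evalG_eqD nu nu' s : s \in D ->
  (forall w, w \in D -> nu w = nu' w) -> evalG nu s = evalG nu' s.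
Proof. by move=> sD H; apply: evalG_local => // w wD _; apply: H. Qed.

End Children.
Lemma prefix_rconsE (s u : seq nat) x :
  prefix s (rcons u x) = (s == rcons u x) || prefix s u.
Proof.
apply/idP/idP.
  rewrite !prefixE => /eqP E.
  case: (leqP (size s) (size u)) => le.
    by rewrite -[X in _ || (_ == X)]E -cats1 takel_cat // eqxx orbT.
  have szs : size s = size (rcons u x).
    have := size_take (size s) (rcons u x); rewrite E size_rcons.
    by case: ifP; lia.
  by move: E; rewrite szs take_size => ->; rewrite eqxx.
case/orP=> [/eqP->|]; first exact: prefix_refl.
by move=> p; apply: prefix_trans p (prefix_rcons _ _).
Qed.

Lemma prefix_eq_size (a b w : seq nat) :
  prefix a w -> prefix b w -> size a = size b -> a = b.
Proof. by rewrite !prefixE => /eqP Ea /eqP Eb sz; rewrite -Ea -Eb sz. Qed.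

Section Dom.
Variables (Sigma : Type) (T : utree Sigma).
Notation D := (dom T).

Lemma root_in : [::] \in D.
Proof. by case: (dom_ok T). Qed.

Lemma dom_prefix u s : u \in D -> prefix s u -> s \in D.
Proof.
case: (dom_ok T) => r0 hp _.
elim/last_ind: u s => [|u x IH] s.
  by move=> _; rewrite prefixs0 => /eqP->.
move=> uD; rewrite prefix_rconsE => /orP[/eqP->//|]; apply: IH.
by case: (hp _ _ uD).
Qed.

Lemma notin_0 : [:: 0] \notin D.
Proof.
case: (dom_ok T) => _ hp _; apply/negP => /(hp [::] 0) [] //.
Qed.

Lemma sub_child s w : w \in D -> prefix s w -> w != s ->
  exists c, [/\ c \in D, child_of s c & prefix c w].
Proof.
move=> wD psw nws; exists (take (size s).+1 w).
have szw : size s < size w.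
  have := size_prefix psw; rewrite leq_eqVlt => /orP[/eqP E|//].
  by move: psw; rewrite prefixE E take_size (negbTE nws).
split; first exact: dom_prefix wD (prefix_take _ _).
  rewrite /child_of size_take.
  have -> : (if (size s).+1 < size w then (size s).+1 else size w) = (size s).+1.
    by case: ifP; lia.
  rewrite eqxx /= prefixE take_takel ?leqnSn //; by rewrite prefixE in psw.
exact: prefix_take.
Qed.

Lemma child_rcons s u : child_of s u -> u = rcons s (last 0 u).
Proof.
case/andP=> /eqP sz /prefixP [t E]; move: sz; rewrite E size_cat.
case: t E => [|a [|b t]] E /=; try lia.
by move=> _; rewrite cats1 last_rcons.
Qed.

Lemma child_not_prefix s c : child_of s c -> ~~ prefix c s.
Proof. by case/andP=> /eqP sz _; apply/negP=> /size_prefix; rewrite sz ltnn. Qed.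

End Dom.

Section Before.
Variables (Q : Type).
Fixpoint before (P R : pred Q) (l : seq Q) : bool :=
  if l is x :: l' then (P x && has R l') || before P R l' else false.

Definition hpat (P G R : pred Q) (h : bool * bool) (x : Q) :=
  (h.1 || P x, [|| h.2, G x | h.1 && R x]).

Lemma foldl_hpat P G R l a g : foldl (hpat P G R) (a, g) l =
  (a || has P l, [|| g, has G l, a && has R l | before P R l]).
Proof.
elim: l a g => [|x l IH] a g /=; first by case: a; case: g.
rewrite /hpat /= IH; congr pair; first by rewrite orbA.
by case: a; case: (P x); case: (G x); case: (R x); case: g; case: (has G l);
  case: (has R l); case: (before P R l).
Qed.
End Before.

Lemma before_map (Q A : Type) (f : A -> Q) P R l :
  before P R (map f l) = before (P \o f) (R \o f) l.
Proof. by elim: l => //= x l ->; rewrite has_map. Qed.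


Lemma before_sorted (A : eqType) (so : rel A) (P R : pred A) l :
  transitive so -> irreflexive so -> sorted so l ->
  before P R l = has (fun u => P u && has (fun v => R v && so u v) l) l.
Proof.
move=> tr irr; elim: l => //= x l IH srt.
have allx : all (so x) l by apply: order_path_min.
rewrite IH ?(path_sorted srt) // irr andbF /=.
apply/idP/idP.
  case/orP=> [/andP[Px /hasP[v vl Rv]]|].
    by apply/orP; left; rewrite Px /=; apply/hasP; exists v => //;
      rewrite Rv (allP allx).
  case/hasP=> u ul /andP[Pu /hasP[v vl /andP[Rv suv]]].
  apply/orP; right; apply/hasP; exists u => //; rewrite Pu /=.
  by apply/orP; right; apply/hasP; exists v => //; rewrite Rv.
case/orP=> [/andP[Px /hasP[v vl /andP[Rv _]]]|].
  by apply/orP; left; rewrite Px; apply/hasP; exists v.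
case/hasP=> u ul /andP[Pu /orP[/andP[Rx sux]|/hasP[v vl /andP[Rv suv]]]].
  by have := irr x; rewrite (tr _ _ _ ((allP allx) u ul) sux).
apply/orP; right; apply/hasP; exists u => //; rewrite Pu; apply/hasP; exists v => //.
by rewrite Rv.
Qed.

Lemma before_uniq (A : eqType) (P : pred A) l : uniq l ->
  before P P l = has (fun u => P u && has (fun v => (u != v) && P v) l) l.
Proof.
elim: l => //= x l IH /andP[xl ul]; rewrite IH // eqxx /=.
apply/idP/idP.
  case/orP=> [/andP[Px /hasP[v vl Pv]]|].
    apply/orP; left; rewrite Px /=; apply/hasP; exists v => //.
    by rewrite Pv andbT; apply: contraNneq xl => ->.
  case/hasP=> u u_l /andP[Pu /hasP[v vl /andP[uv Pv]]].
  apply/orP; right; apply/hasP; exists u => //; rewrite Pu /=.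
  by apply/orP; right; apply/hasP; exists v => //; rewrite uv.
case/orP=> [/andP[Px /hasP[v vl /andP[_ Pv]]]|].
  by apply/orP; left; rewrite Px; apply/hasP; exists v.
case/hasP=> u u_l /andP[Pu /orP[/andP[_ Px]|/hasP[v vl /andP[uv Pv]]]].
  by apply/orP; left; rewrite Px; apply/hasP; exists u.
apply/orP; right; apply/hasP; exists u => //; rewrite Pu; apply/hasP; exists v => //.
by rewrite uv.
Qed.
Definition cb (P : Prop) : bool := if excluded_middle_informative P then true else false.
Lemma cbP P : reflect P (cb P).
Proof. by rewrite /cb; case: excluded_middle_informative => h; constructor. Qed.

Record DTA (L : Type) := MkDTA {
  dQ : finType; dH : finType;
  dh0 : L -> dH; dht : L -> dH -> dQ -> dH; dout : L -> dH -> dQ; dfin : pred dQ }.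
Arguments dQ {L} d. Arguments dH {L} d.
Arguments dh0 {L} d _. Arguments dht {L} d _ _ _. Arguments dout {L} d _ _.
Arguments dfin {L} d _.

Definition gA L (A : DTA L) (l : L) (w : seq (dQ A)) : dQ A :=
  dout A l (foldl (dht A l) (dh0 A l) w).

Arguments gA {L} A _ _.
Definition evalA L (A : DTA L) D so (nu : seq nat -> L) := evalG D (gA A) so nu.
Arguments evalA {L} A D so nu _.
Definition acc L (A : DTA L) D so nu := dfin A (evalA A D so nu [::]).
Arguments acc {L} A D so nu.

Section SO.
Variables (Sigma : Type) (T : utree Sigma) (so : rel (seq nat)).
Hypothesis hso : sibling_order T so.
Notation D := (dom T).

Lemma so_irr u : so u u = false.
Proof. by apply/negbTE/negP; case: hso => h _ _ /h [_ _ /eqP]. Qed.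

Lemma so_trans : transitive so.
Proof. by case: hso => _ h _ v u w a b; apply: h a b. Qed.

Lemma children_sorted s : sorted so (children D so s).
Proof.
set l := children D so s.
have srt : sorted (fun u v => (u == v) || so u v) l.
  apply: (sort_sorted_in (P := fun w => (w \in D) && child_of s w)).
    move=> u v /andP[uD cu] /andP[vD cv].
    case: (eqVneq u v) => [->|uv]; first by [].
    case: hso => _ _ tot.
    by case/orP: (tot _ _ _ uD vD cu cv uv) => ->; rewrite ?orbT.
  by apply/allP => w; rewrite mem_filter mem_undup andbC.
have ul : uniq l := uniq_children D so s.
move: srt ul; case: l => // x l /=; elim: l x => //= y l IH x /andP[/orP[/eqP->|sxy] p].
  by rewrite inE eqxx.
move=> /andP[]; rewrite inE negb_or => /andP[_ xl] /andP[yl ul].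
by rewrite sxy /= IH //= yl ul.
Qed.

Lemma so_parent u v : so u v -> exists s, [/\ u \in D, v \in D, child_of s u & child_of s v].
Proof. by case: hso => h _ _ /h [uD vD _ [s /andP[??]]]; exists s. Qed.

End SO.
Section Sub.
Variables (Sigma : Type) (T : utree Sigma).
Notation D := (dom T).

Lemma child_prefix_size s c w : child_of s c -> prefix c w -> prefix s w && (s != w).
Proof.
case/andP=> /eqP sz psc pcw; rewrite (prefix_trans psc pcw) /=.
by apply/eqP=> E; move: (size_prefix pcw); rewrite -E sz ltnn.
Qed.

Lemma sub_child' s w : w \in D -> prefix s w -> s != w ->
  exists c, [/\ c \in D, child_of s c & prefix c w].
Proof. by move=> wD psw sw; apply: sub_child => //; rewrite eq_sym. Qed.

Lemma strict_rec (pw : pred (seq nat)) o s :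
  has (fun w => prefix s w && (s != w) && pw w) D =
  has (fun c => has (fun w => prefix c w && pw w) D) (children D o s).
Proof.
apply/hasP/hasP.
  case=> w wD /andP[/andP[psw sw] pww].
  have ws : w != s by rewrite eq_sym.
  have [c [cD cc pcw]] := sub_child wD psw ws.
  by exists c; [rewrite mem_children cD cc | apply/hasP; exists w => //; rewrite pcw].
case=> c; rewrite mem_children => /andP[cD cc] /hasP[w wD /andP[pcw pww]].
by exists w => //; rewrite (child_prefix_size cc pcw).
Qed.

Lemma ex_rec (pw : pred (seq nat)) o s : s \in D ->
  has (fun w => prefix s w && pw w) D =
  pw s || has (fun c => has (fun w => prefix c w && pw w) D) (children D o s).
Proof.
move=> sD; rewrite -strict_rec; apply/hasP/orP.
  case=> w wD /andP[psw pww]; case: (eqVneq s w) => [->|sw]; first by left.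
  by right; apply/hasP; exists w => //; rewrite psw sw.
case=> [ps|/hasP[w wD /andP[/andP[psw _] pww]]]; last by exists w => //; rewrite psw.
by exists s => //; rewrite prefix_refl.
Qed.

Lemma children_disj o s c d w : c \in children D o s -> d \in children D o s ->
  prefix c w -> prefix d w -> c = d.
Proof.
rewrite !mem_children => /andP[_ /andP[/eqP sc _]] /andP[_ /andP[/eqP sd _]] pc pd.
by apply: (prefix_eq_size pc pd); rewrite sc sd.
Qed.

End Sub.
Lemma before_pred0 (Q : Type) (P : pred Q) l : before P pred0 l = false.
Proof. by elim: l => //= x l ->; rewrite has_pred0 andbF. Qed.

Section Atoms.
Variables (Sigma : Type) (T : utree Sigma) (L : Type) (nu : seq nat -> L).
Notation D := (dom T).

Definition Eaut (p : pred L) : DTA L :=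
  @MkDTA L bool (bool * bool)%type (fun _ => (false, false))
    (fun _ => hpat id pred0 pred0) (fun l h => p l || h.1) id.

Lemma Eaut_acc p o : acc (Eaut p) D o nu = has (fun w => p (nu w)) D.
Proof.
rewrite /acc /evalA -(@evalG_unique D _ _ _ o nu (fun s => has (fun w => prefix s w && p (nu w)) D)).
- by apply: eq_has => w; rewrite prefix0s.
- move=> s sD; rewrite (ex_rec (fun w => p (nu w)) o sD) /gA /= foldl_hpat /=.
  by rewrite has_map.
- exact: (root_in T).
Qed.

Definition Daut (p r : pred L) : DTA L :=
  @MkDTA L (bool * bool)%type (bool * bool)%type (fun _ => (false, false))
    (fun _ => hpat fst snd pred0) (fun l h => (r l || h.1, h.2 || (p l && h.1))) snd.

Lemma Daut_acc p r o : acc (Daut p r) D o nu =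
  has (fun u => p (nu u) && has (fun v => desc u v && r (nu v)) D) D.
Proof.
pose pw u := p (nu u) && has (fun v => desc u v && r (nu v)) D.
rewrite /acc /evalA -(@evalG_unique D _ _ _ o nu (fun s => (has (fun w => prefix s w && r (nu w)) D,
   has (fun w => prefix s w && pw w) D))).
- by rewrite /=; apply: eq_has => w; rewrite prefix0s.
- move=> s sD; rewrite /gA /= foldl_hpat /= before_pred0 !has_map /=.
  rewrite (ex_rec (fun w => r (nu w)) o sD) (ex_rec pw o sD); congr pair.
  rewrite orbC /pw; congr orb; first by rewrite orbF. congr (_ && _).
  by rewrite -(strict_rec T (fun w => r (nu w)) o s).
- exact: (root_in T).
Qed.

Definition Naut (m : pred L) : DTA L :=
  @MkDTA L (bool * bool)%type (bool * bool)%type (fun _ => (false, false))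
    (fun _ => hpat fst snd fst) (fun l h => (m l || h.1, h.2 || (m l && h.1)))
    (fun q => q.1 && ~~ q.2).

Definition h1f (m : pred (seq nat)) s := has (fun w => prefix s w && m w) D.
Definition h2f (m : pred (seq nat)) s := has (fun u => prefix s u && m u &&
                has (fun v => prefix s v && (u != v) && m v) D) D.

Lemma Naut_rec (m : pred (seq nat)) o s : s \in D ->
  h2f m s = [|| has (h2f m) (children D o s),
             has (fun c => h1f m c && has (fun d => (c != d) && h1f m d) (children D o s))
               (children D o s) | m s && has (h1f m) (children D o s)].
Proof.
move=> sD; rewrite /h1f /h2f; apply/idP/idP.
  case/hasP=> u uD /andP[/andP[psu mu] /hasP[v vD /andP[/andP[psv uv] mv]]].
  case: (eqVneq s u) => [esu|nsu].
    rewrite -esu in uv mu *; rewrite mu /=.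
    have [c [cD cc pcv]] := sub_child' vD psv uv.
    do 2 (apply/orP; right); apply/hasP; exists c; first by rewrite mem_children cD cc.
    by apply/hasP; exists v => //; rewrite pcv.
  have [cu [cuD ccu pcu]] := sub_child' uD psu nsu.
  have cuin : cu \in children D o s by rewrite mem_children cuD ccu.
  case: (eqVneq s v) => [esv|nsv].
    rewrite -esv in mv uv *; rewrite mv /=.
    do 2 (apply/orP; right); apply/hasP; exists cu => //.
    by apply/hasP; exists u => //; rewrite pcu.
  have [cv [cvD ccv pcv]] := sub_child' vD psv nsv.
  have cvin : cv \in children D o s by rewrite mem_children cvD ccv.
  case: (eqVneq cu cv) => [ecuv|ncuv].
    apply/orP; left; apply/hasP; exists cu => //; apply/hasP; exists u => //.
    rewrite pcu mu /=; apply/hasP; exists v => //; by rewrite ecuv pcv uv.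
  apply/orP; right; apply/orP; left; apply/hasP; exists cu => //.
  apply/andP; split; first by apply/hasP; exists u => //; rewrite pcu.
  by apply/hasP; exists cv => //; rewrite ncuv /=; apply/hasP; exists v => //; rewrite pcv.
case/or3P.
- case/hasP=> c; rewrite mem_children => /andP[cD cc].
  case/hasP=> u uD /andP[/andP[pcu mu] /hasP[v vD /andP[/andP[pcv uv] mv]]].
  apply/hasP; exists u => //; rewrite (andP (child_prefix_size cc pcu)).1 mu /=.
  by apply/hasP; exists v => //; rewrite (andP (child_prefix_size cc pcv)).1 uv.
- case/hasP=> c cin /andP[/hasP[u uD /andP[pcu mu]] /hasP[d din /andP[cd /hasP[v vD /andP[pdv mv]]]]].
  have cc : child_of s c by move: cin; rewrite mem_children => /andP[].
  have dc : child_of s d by move: din; rewrite mem_children => /andP[].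
  apply/hasP; exists u => //; rewrite (andP (child_prefix_size cc pcu)).1 mu /=.
  apply/hasP; exists v => //; rewrite (andP (child_prefix_size dc pdv)).1 mv andbT /=.
  by apply/eqP=> euv; rewrite -euv in pdv; move/eqP: cd; apply; apply: children_disj cin din pcu pdv.
- case/andP=> ms /hasP[c cin /hasP[w wD /andP[pcw mw]]].
  have cc : child_of s c by move: cin; rewrite mem_children => /andP[].
  apply/hasP; exists s => //; rewrite prefix_refl ms /=.
  by apply/hasP; exists w => //; rewrite (child_prefix_size cc pcw).
Qed.

Lemma Naut_acc m o : acc (Naut m) D o nu =
  has (fun w => m (nu w)) D &&
  ~~ has (fun u => m (nu u) && has (fun v => (u != v) && m (nu v)) D) D.
Proof.
pose h1 := h1f (fun w => m (nu w)).
pose h2 := h2f (fun w => m (nu w)).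
rewrite /acc /evalA -(@evalG_unique D _ _ _ o nu (fun s => (h1 s, h2 s))).
- rewrite /= /h1 /h2 /h1f /h2f; congr (_ && ~~ _); first by apply: eq_has => w; rewrite prefix0s.
  apply: eq_has => u; rewrite prefix0s /=; congr andb.
  by apply: eq_has => v; rewrite prefix0s.
- move=> s sD; rewrite /gA /= foldl_hpat /= !has_map /= before_map.
  rewrite (before_uniq _ (uniq_children D o s)) /=.
  rewrite {1}/h1 /h1f (ex_rec (fun w => m (nu w)) o sD) -/(h1f _) -/h1; congr pair.
  rewrite /h2 (Naut_rec (fun w => m (nu w)) o sD) orbA; reflexivity.
- exact: (root_in T).
Qed.

Variables (so : rel (seq nat)) (hso : sibling_order T so).

Definition Saut (p r : pred L) : DTA L :=
  @MkDTA L ((bool * bool) * bool)%type (bool * bool)%type (fun _ => (false, false))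
    (fun _ => hpat (fun q => q.1.1) (fun q => q.2) (fun q => q.1.2))
    (fun l h => ((p l, r l), h.2)) (fun q => q.2).

Lemma Saut_acc p r : acc (Saut p r) D so nu =
  has (fun u => p (nu u) && has (fun v => r (nu v) && so u v) D) D.
Proof.
pose pw u := p (nu u) && has (fun v => r (nu v) && so u v) D.
pose good s := has (fun u => prefix s u && (s != u) && pw u) D.
rewrite /acc /evalA -(@evalG_unique D _ _ _ so nu (fun s => ((p (nu s), r (nu s)), good s))).
- rewrite /= /good; apply: eq_has => u; rewrite prefix0s /= /pw.
  case: (eqVneq [::] u) => [<-|//]; rewrite /=.
  symmetry; apply/negbTE/negP=> /andP[_ /hasP[v _ /andP[_ /(so_parent hso) [t [_ _ ct _]]]]].
  by case/andP: ct => /eqP.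
- move=> s sD; rewrite /gA /= foldl_hpat /= !has_map /= before_map.
  rewrite (before_sorted _ _ (so_trans hso) (so_irr hso) (children_sorted hso s)).
  congr pair; rewrite /good (strict_rec T pw so s).
  have E : {in children D so s, (fun c => has (fun w => prefix c w && pw w) D) =1 predU pw good}.
    move=> c; rewrite mem_children => /andP[cD _] /=; rewrite /good.
    by rewrite (ex_rec pw so cD) (strict_rec T pw so c).
  rewrite (eq_in_has E).
  rewrite has_predU orbC; congr orb; apply: eq_in_has => c cin /=.
  rewrite /pw; congr andb; apply/hasP/hasP; last first.
    by case=> v; rewrite mem_children => /andP[vD _] ?; exists v.
  case=> v vD /andP[rv suv]; exists v; last by rewrite rv suv.
  have [t [_ _ ct cv]] := so_parent hso suv.
  move: cin; rewrite !mem_children => /andP[_ cs]; rewrite vD /=.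
  suff est : s = t by rewrite est.
  case/andP: cs => /eqP s1 psc; case/andP: ct => /eqP s2 pt.
  have ss : size s = size t by move: s1; rewrite s2 => -[].
  exact: (prefix_eq_size psc pt ss).
- exact: (root_in T).
Qed.

End Atoms.
Section Comb.
Variables (Sigma : Type) (T : utree Sigma) (L : Type) (so : rel (seq nat)).
Notation D := (dom T).

Definition NotA (A : DTA L) : DTA L :=
  @MkDTA L (dQ A) (dH A) (dh0 A) (dht A) (dout A) (fun q => ~~ dfin A q).

Lemma NotA_acc A nu : acc (NotA A) D so nu = ~~ acc A D so nu.
Proof. by []. Qed.

Definition ProdA (op : bool -> bool -> bool) (A B : DTA L) : DTA L :=
  @MkDTA L (dQ A * dQ B)%type (dH A * dH B)%type
    (fun l => (dh0 A l, dh0 B l))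
    (fun l h q => (dht A l h.1 q.1, dht B l h.2 q.2))
    (fun l h => (dout A l h.1, dout B l h.2))
    (fun q => op (dfin A q.1) (dfin B q.2)).

Lemma foldl_pair (X Y HX HY : Type) (f : HX -> X -> HX) (g : HY -> Y -> HY)
  (Z : Type) (F : Z -> X) (G : Z -> Y) l a b :
  foldl (fun h q => (f h.1 q.1, g h.2 q.2)) (a, b) (map (fun z => (F z, G z)) l) =
  (foldl f a (map F l), foldl g b (map G l)).
Proof. by elim: l a b => //= z l IH a b; rewrite IH. Qed.

Lemma ProdA_acc op A B nu :
  acc (ProdA op A B) D so nu = op (acc A D so nu) (acc B D so nu).
Proof.
rewrite /acc /evalA -(@evalG_unique D _ _ _ so nu
   (fun s => (evalG D (gA A) so nu s, evalG D (gA B) so nu s))) //.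
- move=> s sD; rewrite /gA /= foldl_pair.
  by rewrite [X in (X, _)]evalG_rec [X in (_, X)]evalG_rec.
- exact: (root_in T).
Qed.

Variable flip : bool -> L -> L.

Definition ProjA (A : DTA L) : DTA L :=
  @MkDTA L {set dQ A} {set (bool * dH A)}
    (fun l => [set (b, dh0 A (flip b l)) | b : bool])
    (fun l S X => [set (x.1, dht A (flip x.1 l) x.2 q) | x in S, q in X])
    (fun l S => [set dout A (flip x.1 l) x.2 | x in S])
    (fun S => [exists q in S, dfin A q]).

Lemma all2_size (X Y : Type) (r : X -> Y -> bool) s t : all2 r s t -> size s = size t.
Proof. by elim: s t => [|x s IH] [|y t] //= /andP[_ /IH ->]. Qed.

Lemma all2_rcons (X Y : Type) (r : X -> Y -> bool) s t x y : size s = size t ->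
  all2 r (rcons s x) (rcons t y) = all2 r s t && r x y.
Proof.
elim: s t => [|a s IH] [|b t] //=; first by rewrite andbT.
by move=> [E]; rewrite IH // andbA.
Qed.

Lemma all2_map_self (X Y : Type) (r : X -> Y -> bool) (f : Y -> X) l :
  all2 r (map f l) l = all (fun c => r (f c) c) l.
Proof. by elim: l => //= c l ->. Qed.

Lemma foldl_proj (A : DTA L) l (X : seq nat -> {set dQ A}) cs b h :
  ((b, h) \in foldl (dht (ProjA A) l) (dh0 (ProjA A) l) (map X cs)) <->
  exists qs, all2 (fun q c => q \in X c) qs cs /\
             h = foldl (dht A (flip b l)) (dh0 A (flip b l)) qs.
Proof.
elim/last_ind: cs b h => [|cs c IH] b h /=.
  split.
    by case/imsetP=> b' _ [-> ->]; exists [::].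
  by case=> qs []; case: qs => [|q qs] //= _ ->; apply/imsetP; exists b.
rewrite map_rcons foldl_rcons; split.
  case/imset2P=> [[b' h'] q] hin qin [eb eh].
  rewrite /= in eb eh; subst b'.
  have [qs [a2 eh']] := (IH b h').1 hin.
  exists (rcons qs q); rewrite all2_rcons ?(all2_size a2) // a2 qin.
  by rewrite foldl_rcons -eh' eh.
case=> qs; case/lastP: qs => [|qs q]; first by case=> /all2_size; rewrite size_rcons.
move=> [a2 eh]; have sz : size qs = size cs.
  by move/all2_size: a2; rewrite !size_rcons => -[].
move: a2; rewrite all2_rcons // => /andP[a2 qin].
apply/imset2P; exists (b, foldl (dht A (flip b l)) (dh0 A (flip b l)) qs) q => //.
  by apply/IH; exists qs.
by rewrite eh foldl_rcons.
Qed.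

Variables (A : DTA L) (nu : seq nat -> L).

Definition agree (nu' : seq nat -> L) := forall w, exists b, nu' w = flip b (nu w).

Definition ptau s : {set dQ A} :=
  [set q | cb (exists nu', agree nu' /\ evalA A D so nu' s = q)].

Lemma combine s cs qs : {subset cs <= children D so s} -> uniq cs ->
  all2 (fun q c => q \in ptau c) qs cs ->
  exists nu', agree nu' /\ map (evalA A D so nu') cs = qs.
Proof.
elim: cs qs => [|c cs IH] qs sub ucs a2.
  by case: qs a2 => //= _; exists (fun w => flip false (nu w)); split => // w; exists false.
case: qs a2 => [|q qs] //= /andP[qin a2]; move: ucs => /andP[ncs ucs].
have sub' : {subset cs <= children D so s} by move=> x xin; apply: sub; rewrite inE xin orbT.
have [nu1 [ag1 e1]] := IH qs sub' ucs a2.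
move: qin; rewrite inE => /cbP [nuc [agc ec]].
have cin : c \in children D so s by apply: sub; rewrite inE eqxx.
have cD : c \in D by move: cin; rewrite mem_children => /andP[].
exists (fun w => if prefix c w then nuc w else nu1 w); split.
  by move=> w; case: ifP => _; [apply: agc | apply: ag1].
congr cons.
  by rewrite -ec; apply: evalG_local => // w _ ->.
rewrite -e1; apply/eq_in_map => c' c'in.
have c'ch : c' \in children D so s by apply: sub; rewrite inE c'in orbT.
have c'D : c' \in D by move: c'ch; rewrite mem_children => /andP[].
apply: evalG_local => // w wD pc'w; case: ifP => // pcw.
by have E := children_disj cin c'ch pcw pc'w; rewrite E c'in in ncs.
Qed.

Lemma ProjA_eval s : s \in D -> evalA (ProjA A) D so nu s = ptau s.
Proof.
move=> sD; symmetry; move: s sD; apply: evalG_unique => s sD.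
apply/setP => q; rewrite [in LHS]inE /gA /=; apply/cbP/imsetP.
  case=> nu' [ag E]; have [b eb] := ag s.
  exists (b, foldl (dht A (flip b (nu s))) (dh0 A (flip b (nu s)))
               (map (evalA A D so nu') (children D so s))).
    apply/foldl_proj; exists (map (evalA A D so nu') (children D so s)); split => //.
    rewrite all2_map_self; apply/allP => c _; rewrite inE; apply/cbP.
    by exists nu'.
  by rewrite -E /evalA evalG_rec eb.
case=> -[b h] hin ->.
move/foldl_proj: hin => [qs [a2 eh]].
have [nu1 [ag1 e1]] := combine (fun x h => h) (uniq_children D so s) a2.
exists (fun w => if w == s then flip b (nu s) else nu1 w); split.
  by move=> w; case: eqP => [->|_]; [exists b | apply: ag1].
rewrite /evalA evalG_rec eqxx /gA /= eh -e1; congr dout; congr foldl.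
apply/eq_in_map => c cin; apply: evalG_local.
  by move: cin; rewrite mem_children => /andP[].
move=> w wD pcw; case: eqP => // ews; rewrite ews in pcw.
have cc : child_of s c by move: cin; rewrite mem_children => /andP[].
by move: (child_not_prefix cc); rewrite pcw.
Qed.

Lemma ProjA_acc : acc (ProjA A) D so nu <-> exists nu', agree nu' /\ acc A D so nu'.
Proof.
rewrite /acc ProjA_eval ?(root_in T) //; split.
  case/existsP=> q /andP[]; rewrite inE => /cbP [nu' [ag E]] fq.
  by exists nu'; rewrite E.
case=> nu' [ag fq]; apply/existsP; exists (evalA A D so nu' [::]); rewrite fq andbT inE.
by apply/cbP; exists nu'.
Qed.

End Comb.
Section Compile.
Variables (Sigma : finType) (n : nat).
Definition Lab := (Sigma * ({ffun 'I_n.+1 -> bool} * {ffun 'I_n.+1 -> bool}))%type.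

Definition bit1 x (l : Lab) := l.2.1 (inord x).
Definition bit2 x (l : Lab) := l.2.2 (inord x).
Definition flip1 x b (l : Lab) : Lab :=
  (l.1, ([ffun i => if i == inord x then b else l.2.1 i], l.2.2)).
Definition flip2 x b (l : Lab) : Lab :=
  (l.1, (l.2.1, [ffun i => if i == inord x then b else l.2.2 i])).

Fixpoint compile (f : mso Sigma) : DTA Lab :=
  match f with
  | MLab a x => Eaut (fun l : Lab => (l.1 == a) && bit1 x l)
  | MDesc x y => Daut (bit1 x) (bit1 y)
  | MSib x y => Saut (bit1 x) (bit1 y)
  | MEq x y => Eaut (fun l => bit1 x l && bit1 y l)
  | MIn x X => Eaut (fun l => bit1 x l && bit2 X l)
  | MNot g => NotA (compile g)
  | MOr g h => ProdA orb (compile g) (compile h)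
  | MEx1 x g => ProjA (flip1 x) (ProdA andb (compile g) (Naut (bit1 x)))
  | MEx2 X g => ProjA (flip2 X) (compile g)
  end.

Fixpoint maxv (f : mso Sigma) : nat :=
  match f with
  | MLab _ x => x
  | MDesc x y | MSib x y | MEq x y | MIn x y => maxn x y
  | MNot g => maxv g
  | MOr g h => maxn (maxv g) (maxv h)
  | MEx1 x g | MEx2 x g => maxn x (maxv g)
  end.

Definition ann (T : utree Sigma) (e1 : nat -> seq nat) (e2 : nat -> pred (seq nat))
  (w : seq nat) : Lab :=
  (lab T w, ([ffun i : 'I_n.+1 => e1 i == w], [ffun i : 'I_n.+1 => e2 i w])).

Lemma eq_inord x (i : 'I_n.+1) : x <= n -> (i == inord x) = (val i == x).
Proof. by move=> le; rewrite -val_eqE /= inordK. Qed.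

Lemma bit1_ann T e1 e2 x w : x <= n -> bit1 x (ann T e1 e2 w) = (e1 x == w).
Proof. by move=> le; rewrite /bit1 /ann /= ffunE inordK. Qed.

Lemma bit2_ann T e1 e2 x w : x <= n -> bit2 x (ann T e1 e2 w) = e2 x w.
Proof. by move=> le; rewrite /bit2 /ann /= ffunE inordK. Qed.

Lemma hasD1 (D : seq (seq nat)) a (P : pred (seq nat)) : a \in D ->
  has (fun w => (a == w) && P w) D = P a.
Proof.
move=> aD; apply/hasP/idP; first by case=> w _ /andP[/eqP-> ].
by move=> Pa; exists a => //; rewrite eqxx.
Qed.

Lemma compile_ok f : maxv f <= n -> forall T so e1 e2, sibling_order T so ->
  (forall x, x \in fv1 f -> e1 x \in dom T) ->
  (sat T so e1 e2 f <-> acc (compile f) (dom T) so (ann T e1 e2)).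
Proof.
elim: f => [a x|x y|x y|x y|x X|g IH|g IHg h IHh|x g IH|X g IH] mv T so e1 e2 hso hfv; rewrite /= in mv hfv.
- rewrite Eaut_acc (eq_has (a2 := fun w => (e1 x == w) && (lab T w == a))).
    by rewrite hasD1 ?hfv ?inE //; split => [->|/eqP].
  by move=> w; rewrite bit1_ann // andbC.
- rewrite Daut_acc.
  rewrite (eq_has (a2 := fun u => (e1 x == u) && has (fun v => desc u v && (e1 y == v)) (dom T)));
    last by move=> u; rewrite bit1_ann ?(leq_trans (leq_maxl _ _) mv) //; congr andb;
      apply: eq_has => v; rewrite bit1_ann // (leq_trans (leq_maxr _ _) mv).
  rewrite hasD1 ?hfv ?inE ?eqxx //.
  rewrite (eq_has (a2 := fun v => (e1 y == v) && desc (e1 x) v)); last by move=> v; rewrite andbC.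
  by rewrite hasD1 ?hfv // !inE eqxx orbT.
- rewrite Saut_acc //.
  rewrite (eq_has (a2 := fun u => (e1 x == u) && has (fun v => (e1 y == v) && so u v) (dom T)));
    last by move=> u; rewrite bit1_ann ?(leq_trans (leq_maxl _ _) mv) //; congr andb;
      apply: eq_has => v; rewrite bit1_ann // (leq_trans (leq_maxr _ _) mv).
  rewrite hasD1 ?hfv ?inE ?eqxx // hasD1 ?hfv // !inE eqxx orbT //.
- rewrite Eaut_acc.
  rewrite (eq_has (a2 := fun w => (e1 x == w) && (e1 y == w)));
    last by move=> w; rewrite !bit1_ann ?(leq_trans (leq_maxl _ _) mv) ?(leq_trans (leq_maxr _ _) mv).
  by rewrite hasD1 ?hfv ?inE ?eqxx //; split => [->|/eqP].
- rewrite Eaut_acc.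
  rewrite (eq_has (a2 := fun w => (e1 x == w) && e2 X w));
    last by move=> w; rewrite bit1_ann ?(leq_trans (leq_maxl _ _) mv) // bit2_ann ?(leq_trans (leq_maxr _ _) mv).
  by rewrite hasD1 ?hfv ?inE ?eqxx //; split => [->|].
- have H := IH mv T so e1 e2 hso hfv; rewrite NotA_acc /=.
  by split => [ns|na s]; [apply/negP => /H | apply: (negP na); apply/H].
- rewrite ProdA_acc /=.
  rewrite (IHg (leq_trans (leq_maxl _ _) mv) T so e1 e2 hso); last by move=> z zin; apply: hfv; rewrite mem_cat zin.
  rewrite (IHh (leq_trans (leq_maxr _ _) mv) T so e1 e2 hso); last by move=> z zin; apply: hfv; rewrite mem_cat zin orbT.
  by split => [[->|->]|/orP[]]; rewrite ?orbT; auto.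
-
  have xn : x <= n := leq_trans (leq_maxl _ _) mv.
  have gn : maxv g <= n := leq_trans (leq_maxr _ _) mv.
  have hfv' u : u \in dom T -> forall z, z \in fv1 g -> upd e1 x u z \in dom T.
    move=> uD z zin; rewrite /upd; case: eqP => // /eqP zx.
    by apply: hfv; rewrite mem_filter /= zx.
  rewrite ProjA_acc; split.
    case=> u [uD su]; exists (ann T (upd e1 x u) e2); split.
      move=> w; exists (u == w); rewrite /ann /flip1 /=; congr (_, (_, _)).
      by apply/ffunP => i; rewrite !ffunE eq_inord // /upd; rewrite (_ : \val i = nat_of_ord i) //; case: (nat_of_ord i == x).
    rewrite ProdA_acc Naut_acc; apply/and3P; split.
    - by move/(IH gn T so _ e2 hso (hfv' u uD)): su.
    - by apply/hasP; exists u => //; rewrite bit1_ann // /upd eqxx.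
    apply/negP => /hasP[v1 _ /andP[]]; rewrite bit1_ann // /upd eqxx => /eqP <-.
    by case/hasP=> v2 _ /andP[/eqP]; rewrite bit1_ann // /upd eqxx => + /eqP.
  case=> nu' [ag]; rewrite ProdA_acc Naut_acc => /andP[ag1 /andP[/hasP[u uD bu] nt]].
  have uniq1 w : w \in dom T -> bit1 x (nu' w) = (u == w).
    move=> wD; apply/idP/eqP => [bw|<-//]; apply/eqP; apply: contraNT nt => uw.
    by apply/hasP; exists u => //; rewrite bu /=; apply/hasP; exists w => //; rewrite uw.
  exists u; split => //; apply/(IH gn T so _ e2 hso (hfv' u uD)).
  suff -> : acc (compile g) (dom T) so (ann T (upd e1 x u) e2) = acc (compile g) (dom T) so nu' by [].
  rewrite /acc /evalA; congr dfin; apply: evalG_eqD; first exact: (root_in T).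
  move=> w wD; have [b eb] := ag w; rewrite eb /flip1 /ann /=; congr (_, (_, _)).
  apply/ffunP => i; rewrite !ffunE eq_inord // /upd (_ : \val i = nat_of_ord i) //.
  case: (nat_of_ord i == x) => //.
  by move: (uniq1 w wD); rewrite eb /bit1 /flip1 /= ffunE eqxx => ->.
-
  have xn : X <= n := leq_trans (leq_maxl _ _) mv.
  have gn : maxv g <= n := leq_trans (leq_maxr _ _) mv.
  rewrite ProjA_acc; split.
    case=> P [PD sP]; exists (ann T e1 (upd e2 X P)); split.
      move=> w; exists (P w); rewrite /ann /flip2 /=; congr (_, (_, _)).
      by apply/ffunP => i; rewrite !ffunE eq_inord // /upd; rewrite (_ : \val i = nat_of_ord i) //; case: (nat_of_ord i == X).
    by rewrite -(IH gn T so e1 _ hso hfv).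
  case=> nu' [ag acg].
  exists (fun w => (w \in dom T) && bit2 X (nu' w)); split; first by move=> u /andP[].
  apply/(IH gn T so e1 _ hso hfv).
  suff -> : acc (compile g) (dom T) so (ann T e1 (fun y => if y == X then (fun w => (w \in dom T) && bit2 X (nu' w)) else e2 y)) = acc (compile g) (dom T) so nu' by [].
  rewrite /acc /evalA; congr dfin; apply: evalG_eqD; first exact: (root_in T).
  move=> w wD; have [b eb] := ag w; rewrite eb /flip2 /ann /=; congr (_, (_, _)).
  apply/ffunP => i; rewrite !ffunE eq_inord // /upd (_ : \val i = nat_of_ord i) //.
  case: (nat_of_ord i == X) => //.
  by rewrite wD /= eb /bit2 /flip2 /= ffunE eqxx.
Qed.

End Compile.
Lemma sat_e1 (Sigma : eqType) (T : utree Sigma) so (f : mso Sigma) :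
  forall e1 e1' e2, (forall x, x \in fv1 f -> e1 x = e1' x) ->
  (sat T so e1 e2 f <-> sat T so e1' e2 f).
Proof.
elim: f => [a x|x y|x y|x y|x X|g IH|g IHg h IHh|x g IH|X g IH] e1 e1' e2 H /=.
- by rewrite H // inE.
- by rewrite !H // !inE eqxx ?orbT.
- by rewrite !H // !inE eqxx ?orbT.
- by rewrite !H // !inE eqxx ?orbT.
- by rewrite H // inE.
- by rewrite (IH e1 e1' e2 H).
- rewrite (IHg e1 e1' e2); last by move=> z zin; apply: H; rewrite mem_cat zin.
  by rewrite (IHh e1 e1' e2) //; move=> z zin; apply: H; rewrite mem_cat zin orbT.
- have H' u : forall z, z \in fv1 g -> upd e1 x u z = upd e1' x u z.
    by move=> z zin; rewrite /upd; case: eqP => // /eqP zx; apply: H; rewrite mem_filter /= zx.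
  by split=> -[u [uD su]]; exists u; split => //; [apply/(IH _ _ _ (H' u)) | apply/(IH _ _ _ (H' u))].
- by split=> -[P [PD sP]]; exists P; split => //; [apply/(IH _ _ _ H) | apply/(IH _ _ _ H)].
Qed.

Definition MapA (L L' : Type) (e : L' -> L) (A : DTA L) : DTA L' :=
  @MkDTA L' (dQ A) (dH A) (fun l => dh0 A (e l)) (fun l => dht A (e l))
    (fun l => dout A (e l)) (dfin A).

Lemma MapA_eval (L L' : Type) (e : L' -> L) (A : DTA L) D so nu s : s \in D ->
  evalA (MapA e A) D so nu s = evalA A D so (fun w => e (nu w)) s.
Proof.
move=> sD; symmetry; move: s sD; apply: evalG_unique => s sD.
by rewrite /evalA evalG_rec.
Qed.

Section CSort.
Variable Q : finType.

Definition csort (w : seq Q) : seq Q := flatten [seq nseq (count_mem q w) q | q <- enum Q].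
Definition leQ (x y : Q) := index x (enum Q) <= index y (enum Q).

Lemma csort_perm w w' : perm_eq w w' -> csort w = csort w'.
Proof.
move/permP=> E; rewrite /csort; congr flatten; apply: eq_map => q.
by rewrite E.
Qed.

Lemma sumn_pick (f : Q -> nat) x l : uniq l ->
  sumn [seq (pred1 x q) * f q | q <- l] = if x \in l then f x else 0.
Proof.
elim: l => //= y l IH /andP[yl ul]; rewrite IH // inE.
case: (eqVneq y x) => [<-|yx] /=; last by rewrite mul0n.
by rewrite (negbTE yl) mul1n addn0.
Qed.

Lemma perm_csort w : perm_eq (csort w) w.
Proof.
rewrite /perm_eq; apply/allP => x _; apply/eqP.
rewrite /csort count_flatten -map_comp.
rewrite (eq_map (g := fun q => (pred1 x q) * count_mem q w)); last first.
  by move=> q /=; rewrite count_nseq.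
by rewrite sumn_pick ?enum_uniq // mem_enum.
Qed.

Lemma leQ_trans : transitive leQ.
Proof. by move=> y x z; apply: leq_trans. Qed.

Lemma leQ_anti : antisymmetric leQ.
Proof.
move=> x y /andP[a b]; have E : index x (enum Q) = index y (enum Q) by apply/eqP; rewrite eqn_leq; apply/andP; split.
by rewrite -(nth_index x (mem_enum Q x)) E nth_index ?mem_enum.
Qed.

Lemma pairwise_index (l : seq Q) : uniq l -> pairwise (fun x y => index x l <= index y l) l.
Proof.
case: l => // x0 l' ul; apply/(pairwiseP x0) => i j; rewrite !inE => ilt jlt ij.
by rewrite !index_uniq // ltnW.
Qed.

Lemma csort_sorted w : sorted leQ (csort w).
Proof.
rewrite sorted_pairwise; last exact: leQ_trans.
have : pairwise leQ (enum Q) by apply: pairwise_index; exact: enum_uniq.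
rewrite /csort; elim: (enum Q) => //= y l IH /andP[ay pl].
rewrite pairwise_cat IH // andbT; apply/andP; split.
  apply/allrelP => a b; rewrite mem_nseq => /andP[_ /eqP->].
  move/flattenP=> [bs /mapP[q ql ->]]; rewrite mem_nseq => /andP[_ /eqP->].
  exact: (allP ay).
by apply/(pairwiseP y) => i j; rewrite !inE size_nseq => ilt jlt _; rewrite !nth_nseq ilt jlt /leQ.
Qed.

Lemma csort_id w : sorted leQ w -> csort w = w.
Proof.
move=> sw; apply: (sorted_eq leQ_trans leQ_anti) => //; first exact: csort_sorted.
exact: perm_csort.
Qed.

Lemma foldl_nseq (H : Type) (f : H -> Q -> H) h k q :
  foldl f h (nseq k q) = iter k (fun h => f h q) h.
Proof. by elim: k h => //= k IH h; rewrite IH -iterSr. Qed.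

Lemma foldl_csort (H : Type) (f : H -> Q -> H) h w :
  foldl f h (csort w) =
  foldl (fun h q => iter (count_mem q w) (fun h => f h q) h) h (enum Q).
Proof.
rewrite /csort; elim: (enum Q) h => //= q l IH h.
by rewrite foldl_cat foldl_nseq IH.
Qed.

End CSort.
Section Final.
Variables (Sigma : finType) (A : DTA Sigma).
Notation Q := (dQ A).

Definition gB (a : Sigma) (w : seq Q) : Q := dout A a (foldl (dht A a) (dh0 A a) (csort w)).

Lemma gB_perm a w w' : perm_eq w w' -> gB a w = gB a w'.
Proof. by move=> p; rewrite /gB (csort_perm p). Qed.

Definition s0B : {ffun Q -> {ffun dH A -> dH A}} := [ffun _ => [ffun h => h]].
Definition trB a (st : {ffun Q -> {ffun dH A -> dH A}}) (x : Q) : {ffun Q -> {ffun dH A -> dH A}} :=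
  [ffun q' => if q' == x then [ffun h => dht A a (st q' h) x] else st q'].

Lemma trB_iter a w q' h :
  foldl (trB a) s0B w q' h = iter (count_mem q' w) (fun h => dht A a h q') h.
Proof.
elim/last_ind: w q' h => [|w x IH] q' h; first by rewrite /= !ffunE.
rewrite foldl_rcons {1}/trB ffunE -cats1 count_cat /= addn0.
case: (eqVneq q' x) => [->|nx].
  by rewrite ffunE IH /= addn1.
by rewrite IH /= addn0.
Qed.

Lemma gB_regular q a : regular (fun w : seq Q => gB a w == q).
Proof.
exists ({ffun Q -> {ffun dH A -> dH A}} : finType), s0B,
  (fun st : {ffun Q -> {ffun dH A -> dH A}} => dout A a (foldl (fun h q' => st q' h) (dh0 A a) (enum Q)) == q), (trB a) => w.
rewrite /gB foldl_csort; congr (dout _ _ _ == _).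
by elim: (enum Q) (dh0 A a) => //= q' l IH h; rewrite IH trB_iter.
Qed.

Definition Nfin : tree_automaton Sigma :=
  @TreeAutomaton Sigma Q (dfin A) (fun q a w => gB a w == q) gB_regular.

Lemma Nfin_det : ta_deterministic Nfin.
Proof.
move=> a q q' w qq'; apply/negP => /andP[/eqP e1 /eqP e2].
by move/eqP: qq'; apply; rewrite -e1 -e2.
Qed.

Lemma Nfin_inv : ta_invariant Nfin.
Proof. by move=> q a w w' p /=; rewrite (gB_perm a p). Qed.

Section Tree.
Variable T : utree Sigma.
Notation D := (dom T).

Definition Ef := evalG D gB (fun _ _ => false) (lab T).

Lemma Ef_run so : is_run Nfin T so Ef.
Proof.
move=> s cs sD ucs mcs _ /=; rewrite [Ef s]evalG_rec; apply/eqP; apply: gB_perm.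
apply: perm_map; apply: uniq_perm => //; first exact: uniq_children.
by move=> w; rewrite mcs mem_children.
Qed.

Lemma run_Ef so rho : sibling_order T so -> is_run Nfin T so rho ->
  forall s, s \in D -> rho s = Ef s.
Proof.
move=> hso hr; apply: evalG_unique => s sD.
have := hr s (children D so s) sD (uniq_children D so s) (mem_children D so s)
  (children_sorted hso s) => /= /eqP <-.
by apply: gB_perm; apply: perm_map; apply: perm_children.
Qed.

Lemma accepts_iff so : sibling_order T so -> (accepts Nfin T so <-> dfin A (Ef [::])).
Proof.
move=> hso; split.
  by case=> rho [hr fr]; rewrite -(run_Ef hso hr (root_in T)).
by move=> f; exists Ef; split => //; apply: Ef_run.
Qed.

Definition iE u := index (Ef u) (enum Q).
Definition par (u : seq nat) := take (size u).-1 u.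
Definition ltk (u v : seq nat) :=
  (iE u < iE v) || ((iE u == iE v) && (last 0 u < last 0 v)).
Definition ostar (u v : seq nat) :=
  [&& u \in D, v \in D, u != [::], v != [::], par u == par v & ltk u v].

Lemma par_child s u : child_of s u -> par u = s.
Proof.
move/child_rcons => ->; rewrite /par size_rcons /= -cats1.
by rewrite take_size_cat.
Qed.

Lemma child_par u : u != [::] -> child_of (par u) u.
Proof.
move=> un; rewrite /child_of /par size_take prefix_take andbT.
by case: u un => //= x u _; rewrite ltnSn.
Qed.

Lemma ltk_trans : transitive ltk.
Proof. rewrite /ltk => v u w; lia. Qed.

Lemma ostar_sib : sibling_order T ostar.
Proof.
split.
- move=> u v /and5P[uD vD un vn /andP[/eqP pe lt]]; split => //.
    by apply/eqP => e; move: lt; rewrite e /ltk ltnn eqxx ltnn.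
  by exists (par u); rewrite child_par //= pe child_par.
- move=> v u w /and5P[uD vD un vn /andP[/eqP p1 l1]] /and5P[_ wD _ wn /andP[/eqP p2 l2]].
  by rewrite /ostar uD wD un wn p1 p2 eqxx (ltk_trans l1 l2).
- move=> s u v uD vD cu cv uv.
  have un : u != [::] by apply/eqP => e; move: cu; rewrite e /child_of.
  have vn : v != [::] by apply/eqP => e; move: cv; rewrite e /child_of.
  rewrite /ostar uD vD un vn (par_child cu) (par_child cv) eqxx /=.
  have lne : last 0 u != last 0 v.
    apply: contraNneq uv => el.
    by rewrite (child_rcons cu) (child_rcons cv) el.
  move: lne; rewrite /ltk; lia.
Qed.

Lemma Ef_ostar s : s \in D -> Ef s = evalA A D ostar (lab T) s.
Proof.
move: s; apply: evalG_unique => s sD.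
rewrite [Ef s]evalG_rec (gB_perm _ (perm_map _ (perm_children D _ ostar s))).
rewrite /gB /gA csort_id //.
rewrite sorted_map; apply: sub_sorted (children_sorted ostar_sib s).
move=> u v /and5P[_ _ _ _ /andP[_ l]]; change (leQ (Ef u) (Ef v)); move: l; rewrite /ltk /iE /leQ; lia.
Qed.

End Tree.
End Final.
Definition emb (Sigma : finType) (n : nat) (a : Sigma) : Lab Sigma n :=
  (a, ([ffun _ => false], [ffun _ => false])).

Unset Implicit Arguments.

Theorem lemma4p4 (Sigma : finType) (S : utree Sigma -> Prop) (phi : mso Sigma) :
  sentence phi -> so_invariant phi ->
  (forall T : utree Sigma,
     S T <-> exists so : rel (seq nat), sibling_order T so /\ models T so phi) ->
  exists N : tree_automaton Sigma,
    [/\ ta_deterministic N, ta_invariant N,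
        (forall T : utree Sigma,
           S T <-> exists so : rel (seq nat), sibling_order T so /\ accepts N T so)
      & (forall T : utree Sigma,
           S T <-> forall so : rel (seq nat), sibling_order T so -> accepts N T so)].
Proof.
move=> sen inv hS.
pose n := maxv phi.
pose A := MapA (@emb Sigma n) (compile n phi).
have fv0 : fv1 phi = [::] by case/andP: sen => /nilP.
have key : forall T, S T <-> dfin A (Ef A T [::]).
  move=> T; have hso := ostar_sib A T.
  have -> : S T <-> models T (ostar A T) phi.
    rewrite hS; split; last by move=> m; exists (ostar A T).
    by case=> so [hso' m]; apply/(inv T so _ hso' hso).
  rewrite /models (sat_e1 _ _ _ (e1' := fun _ => [:: 0])); last by rewrite fv0.
  rewrite (@compile_ok Sigma n phi (leqnn _) T (ostar A T) (fun _ => [:: 0]) (fun _ _ => false) hso); last by rewrite fv0.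
  rewrite (Ef_ostar A (root_in T)) /acc /A MapA_eval ?(root_in T) //.
  have -> : evalA (compile n phi) (dom T) (ostar A T) (ann n T (fun _ => [:: 0]) (fun _ _ => false)) [::]
          = evalA (compile n phi) (dom T) (ostar A T) (fun w => emb n (lab T w)) [::].
    apply: evalG_eqD; first exact: (root_in T).
    move=> w wD; rewrite /ann /emb; congr (_, (_, _)); apply/ffunP => i; rewrite !ffunE //.
    by apply/negbTE; apply: contraNneq (notin_0 T) => ->.
  by [].
exists (Nfin A); split.
- exact: Nfin_det.
- exact: Nfin_inv.
- move=> T; rewrite key; split.
    by move=> f; exists (ostar A T); split; [exact: ostar_sib | apply/(accepts_iff _ (ostar_sib A T))].
  by case=> so [hso ac]; apply/(accepts_iff _ hso).
- move=> T; rewrite key; split.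
    by move=> f so hso; apply/(accepts_iff _ hso).
  by move=> h; apply/(accepts_iff _ (ostar_sib A T)); apply: h; exact: ostar_sib.
Qed.
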